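(* Let $\Gamma=(V,E)$ be a reflexive, locally finite, $k$-separable graph. Let $X,Y$ be two $k$-fragments of $\Gamma$ such that $|X\cap Y|\ge k$ and $|X|-|X\cap Y|+k\le |Y^{\curlywedge}|$. Then $X\cap Y$ and $X\cup Y$ are $k$-fragments of $\Gamma$.
   Context: A graph is a pair $\Gamma=(V,E)$ with $E\subseteq V\times V$; reflexive means $(x,x)\in E$ for all $x$; locally finite means each $\Gamma(x)=\{y:(x,y)\in E\}$ is finite. For $A\subseteq V$: $\Gamma(A)=\bigcup_{x\in A}\Gamma(x)$, $\partial(A)=\Gamma(A)\setminus A$, $A^{\curlywedge}=V\setminus(A\cup\Gamma(A))$. $\Gamma$ is $k$-separable if some finite $X$ has $|X|\ge k$ and $|V\setminus\Gamma(X)|\ge k$; then $\kappa_k(\Gamma)=\min\{|\partial(X)|: X\text{ finite}, |X|\ge k, |V\setminus\Gamma(X)|\ge k\}$, and a $k$-fragment is a finite $X$ with $|X|\ge k$, $|V\setminus\Gamma(X)|\ge k$ and $|\partial(X)|=\kappa_k(\Gamma)$. (When $V$ is infinite, $|Y^{\curlywedge}|$ is infinite.) *)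

(* Defs.v *)
(* the vertex set V may be infinite, so vertex subsets are
   predicates V -> Prop and cardinalities are witnessed by duplicate-free lists. *)
From Stdlib Require Import List Arith.
Import ListNotations.

Section Graphs.
Context {V : Type}.

Definition reflexive_graph (E : V -> V -> Prop) : Prop := forall x, E x x.

Definition card_is (A : V -> Prop) (n : nat) : Prop :=
  exists l : list V, NoDup l /\ length l = n /\ (forall x, A x <-> In x l).

Definition finite_set (A : V -> Prop) : Prop := exists n, card_is A n.

Definition card_ge (A : V -> Prop) (n : nat) : Prop :=
  exists l : list V, NoDup l /\ length l = n /\ (forall x, In x l -> A x).

Definition locally_finite (E : V -> V -> Prop) : Prop :=
  forall x, finite_set (fun y => E x y).

Definition nbhd (E : V -> V -> Prop) (A : V -> Prop) : V -> Prop :=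
  fun y => exists x, A x /\ E x y.
Definition bdry (E : V -> V -> Prop) (A : V -> Prop) : V -> Prop :=
  fun y => nbhd E A y /\ ~ A y.
Definition curly (E : V -> V -> Prop) (A : V -> Prop) : V -> Prop :=
  fun y => ~ A y /\ ~ nbhd E A y.
Definition setI (A B : V -> Prop) : V -> Prop := fun x => A x /\ B x.
Definition setU (A B : V -> Prop) : V -> Prop := fun x => A x \/ B x.

Definition k_admissible (E : V -> V -> Prop) (k : nat) (X : V -> Prop) : Prop :=
  finite_set X /\ card_ge X k /\ card_ge (fun y => ~ nbhd E X y) k.

Definition k_separable (E : V -> V -> Prop) (k : nat) : Prop :=
  exists X, k_admissible E k X.

Definition k_fragment (E : V -> V -> Prop) (k : nat) (X : V -> Prop) : Prop :=
  k_admissible E k X /\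
  exists c, card_is (bdry E X) c /\
    (forall X' c', k_admissible E k X' -> card_is (bdry E X') c' -> c <= c').

End Graphs.

(* Main.v *)
Require Import Defs.
From Stdlib Require Import List Arith Lia Classical ClassicalEpsilon.
Import ListNotations.

Section S.
Context {V : Type}.

Definition ind (P : Prop) : nat := if excluded_middle_informative P then 1 else 0.
Fixpoint cnt (U : list V) (P : V -> Prop) : nat :=
  match U with [] => 0 | a :: U' => ind (P a) + cnt U' P end.

Lemma cnt_le33 U (P1 P2 P3 Q1 Q2 Q3 : V -> Prop) :
  (forall x, ind (P1 x) + ind (P2 x) + ind (P3 x) <= ind (Q1 x) + ind (Q2 x) + ind (Q3 x)) ->
  cnt U P1 + cnt U P2 + cnt U P3 <= cnt U Q1 + cnt U Q2 + cnt U Q3.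
Proof. intros H; induction U as [|a U IH]; simpl; [lia|]. specialize (H a). lia. Qed.

Definition flt (U : list V) (P : V -> Prop) :=
  filter (fun x => if excluded_middle_informative (P x) then true else false) U.

Lemma flt_In U P x : In x (flt U P) <-> In x U /\ P x.
Proof.
  unfold flt; rewrite filter_In.
  destruct (excluded_middle_informative (P x)); intuition congruence.
Qed.

Lemma flt_len U P : length (flt U P) = cnt U P.
Proof.
  induction U as [|a U IH]; simpl; auto. unfold flt in *; simpl; unfold ind.
  destruct (excluded_middle_informative (P a)); simpl; lia.
Qed.

Lemma flt_nodup U P : NoDup U -> NoDup (flt U P).
Proof. intros; apply NoDup_filter; auto. Qed.

Lemma cnt_card U (A : V -> Prop) n : NoDup U -> (forall x, A x -> In x U) ->
  card_is A n -> cnt U A = n.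
Proof.
  intros HU HA [l [Hl [Hn Hi]]]. rewrite <- flt_len.
  assert (H1 := NoDup_incl_length (flt_nodup U A HU) (l' := l)).
  assert (H2 := NoDup_incl_length Hl (l' := flt U A)).
  assert (length (flt U A) <= length l).
  { apply H1. intros x Hx. apply flt_In in Hx. apply Hi; tauto. }
  assert (length l <= length (flt U A)).
  { apply H2. intros x Hx. apply flt_In. apply Hi in Hx. auto. }
  lia.
Qed.

Lemma len_le_cnt U (A : V -> Prop) l : NoDup U -> NoDup l ->
  (forall x, In x l -> In x U /\ A x) -> length l <= cnt U A.
Proof.
  intros HU Hl H. rewrite <- flt_len. apply NoDup_incl_length; auto.
  intros x Hx; apply flt_In; auto.
Qed.

Lemma card_of_cnt U (A : V -> Prop) : NoDup U -> (forall x, A x -> In x U) ->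
  card_is A (cnt U A).
Proof.
  intros HU HA. exists (flt U A). split; [apply flt_nodup; auto|].
  split; [apply flt_len|]. intros x; rewrite flt_In; firstorder.
Qed.

Lemma card_ge_of_cnt U (A : V -> Prop) n : NoDup U -> n <= cnt U A -> card_ge A n.
Proof.
  intros HU Hn. exists (firstn n (flt U A)).
  assert (Hd := flt_nodup U A HU). rewrite <- (firstn_skipn n (flt U A)) in Hd.
  split; [eapply NoDup_app_remove_r; eauto|].
  split; [apply firstn_length_le; rewrite flt_len; auto|].
  intros x Hx. assert (In x (flt U A)).
  { rewrite <- (firstn_skipn n (flt U A)). apply in_or_app; auto. }
  apply flt_In in H; tauto.
Qed.

Lemma card_ge_mono (A B : V -> Prop) n : (forall x, A x -> B x) -> card_ge A n -> card_ge B n.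
Proof. intros H [l [? [? ?]]]; exists l; auto. Qed.

Lemma nodup_cover (l : list V) : exists U, NoDup U /\ forall x, In x l <-> In x U.
Proof.
  induction l as [|a l [U [HU Hi]]].
  - exists []; split; [constructor| simpl; tauto].
  - destruct (classic (In a U)).
    + exists U; split; auto. intros x; simpl; rewrite Hi; intuition congruence.
    + exists (a :: U); split; [constructor; auto|]. intros x; simpl; rewrite Hi; tauto.
Qed.

Lemma nb_list (E : V -> V -> Prop) : locally_finite E -> forall l : list V,
  exists L, forall x y, In x l -> E x y -> In y L.
Proof.
  intros Hlf l; induction l as [|a l [L HL]].
  - exists []; simpl; tauto.
  - destruct (Hlf a) as [n [la [_ [_ Ha]]]].
    exists (la ++ L); intros x y [<-|Hx] He; apply in_or_app; [left; apply Ha; auto|right; eauto].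
Qed.

End S.

Ltac pw := unfold ind;
  repeat match goal with |- context [excluded_middle_informative ?P] =>
    destruct (excluded_middle_informative P) end; try lia; exfalso; tauto.

Theorem mainTheorem3 (V : Type) (E : V -> V -> Prop) (k : nat)
  (Hrefl : reflexive_graph E) (Hlf : locally_finite E) (Hsep : k_separable E k)
  (X Y : V -> Prop) (HX : k_fragment E k X) (HY : k_fragment E k Y)
  (nX nXY : nat) (HnX : card_is X nX) (HnXY : card_is (setI X Y) nXY)
  (Hk : k <= nXY) (Hc : card_ge (curly E Y) (nX - nXY + k)) :
  k_fragment E k (setI X Y) /\ k_fragment E k (setU X Y).
Proof.
  destruct HX as [[finX [geX geNX]] [cX [HcX minX]]].
  destruct HY as [[finY [geY geNY]] [cY [HcY minY]]].
  assert (cX <= cY) by (apply (minX Y); [split; auto|auto]).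
  assert (cY <= cX) by (apply (minY X); [split; auto|auto]).
  assert (HnX' := HnX).
  destruct HnX' as [lX [_ [_ HlX]]].
  destruct finY as [nY [lY [_ [_ HlY]]]].
  destruct Hc as [lc [Hlc [Hlcn Hlci]]].
  destruct (nb_list E Hlf lX) as [LX HLX].
  destruct (nb_list E Hlf lY) as [LY HLY].
  destruct (nodup_cover (lX ++ lY ++ LX ++ LY ++ lc)) as [U [HU HUi]].
  assert (hXN : forall x, X x -> nbhd E X x) by (intros x Hx; exists x; split; auto; apply Hrefl).
  assert (hYN : forall x, Y x -> nbhd E Y x) by (intros x Hx; exists x; split; auto; apply Hrefl).
  assert (hI : forall x, nbhd E (setI X Y) x -> nbhd E X x /\ nbhd E Y x).
  { intros x [z [[? ?] ?]]; split; exists z; auto. }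
  assert (hU : forall x, nbhd E (setU X Y) x <-> nbhd E X x \/ nbhd E Y x).
  { intros x; split.
    - intros [z [[?|?] ?]]; [left|right]; exists z; auto.
    - intros [[z [? ?]]|[z [? ?]]]; exists z; split; auto; unfold setU; auto. }
  assert (uNX : forall y, nbhd E X y -> In y U).
  { intros y [z [Hz Hzy]]; apply HUi; apply in_or_app; right; apply in_or_app; right;
    apply in_or_app; left; apply (HLX z); auto; apply HlX; auto. }
  assert (uNY : forall y, nbhd E Y y -> In y U).
  { intros y [z [Hz Hzy]]; apply HUi; apply in_or_app; right; apply in_or_app; right;
    apply in_or_app; right; apply in_or_app; left; apply (HLY z); auto; apply HlY; auto. }
  assert (uX : forall y, X y -> In y U) by auto.
  assert (HcXe : cnt U (bdry E X) = cX).
  { apply cnt_card; auto. intros y [? ?]; auto. }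
  assert (HcYe : cnt U (bdry E Y) = cY).
  { apply cnt_card; auto. intros y [? ?]; auto. }
  assert (HnXe : cnt U X = nX) by (apply cnt_card; auto).
  assert (HnXYe : cnt U (setI X Y) = nXY).
  { apply cnt_card; auto. intros y [? ?]; auto. }
  assert (Hlcle : length lc <= cnt U (curly E Y)).
  { apply len_le_cnt; auto. intros x Hx; split; auto.
    apply HUi; repeat (apply in_or_app; right); auto. }
  assert (admI : k_admissible E k (setI X Y)).
  { split; [exists nXY; auto|split].
    - apply (card_ge_of_cnt U); auto; lia.
    - revert geNX; apply card_ge_mono. intros y Hy Hn; apply Hy. apply hI in Hn; tauto. }
  assert (HsI : card_is (bdry E (setI X Y)) (cnt U (bdry E (setI X Y)))).
  { apply card_of_cnt; auto. intros y [Hy _]. apply hI in Hy; destruct Hy; auto. }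
  assert (HsU : card_is (bdry E (setU X Y)) (cnt U (bdry E (setU X Y)))).
  { apply card_of_cnt; auto. intros y [Hy _]. apply hU in Hy; destruct Hy; auto. }
  assert (k1 : cX <= cnt U (bdry E (setI X Y))) by (apply (minX (setI X Y)); auto).
  assert (i1 : cnt U (bdry E (setI X Y)) + cnt U (bdry E (setU X Y)) + cnt U (fun _ => False)
     <= cnt U (bdry E X) + cnt U (bdry E Y) + cnt U (fun _ => False)).
  { apply cnt_le33; intros x. specialize (hXN x); specialize (hYN x); specialize (hI x);
    specialize (hU x). unfold bdry, setI, setU in *. pw. }
  assert (i2 : cnt U (bdry E Y) + cnt U (fun x => nbhd E X x /\ ~ nbhd E Y x /\ ~ X x)
      + cnt U (fun _ => False)
     <= cnt U (bdry E (setU X Y)) + cnt U (fun x => X x /\ nbhd E Y x /\ ~ Y x)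
      + cnt U (fun _ => False)).
  { apply cnt_le33; intros x. specialize (hXN x); specialize (hYN x);
    specialize (hU x). unfold bdry, setU in *. pw. }
  assert (i3 : cnt U (curly E Y) + cnt U (fun _ => False) + cnt U (fun _ => False)
     <= cnt U (fun x => X x /\ ~ nbhd E Y x) + cnt U (fun x => nbhd E X x /\ ~ nbhd E Y x /\ ~ X x)
       + cnt U (fun x => ~ nbhd E (setU X Y) x)).
  { apply cnt_le33; intros x. specialize (hXN x); specialize (hYN x);
    specialize (hU x). unfold curly, setU in *. pw. }
  assert (i4 : cnt U (fun x => X x /\ ~ nbhd E Y x) + cnt U (fun x => X x /\ nbhd E Y x /\ ~ Y x)
      + cnt U (setI X Y)
     <= cnt U X + cnt U (fun _ => False) + cnt U (fun _ => False)).
  { apply cnt_le33; intros x. specialize (hXN x); specialize (hYN x).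
    unfold setI in *. pw. }
  assert (c0 : cnt U (fun _ : V => False) = 0).
  { clear -U. induction U; simpl; auto. unfold ind in *.
    destruct (excluded_middle_informative False); tauto. }
  assert (admU : k_admissible E k (setU X Y)).
  { split; [eexists; apply (card_of_cnt U); auto; intros y [?|?]; auto|split].
    - revert geX; apply card_ge_mono; unfold setU; auto.
    - apply (card_ge_of_cnt U); auto. lia. }
  assert (k2 : cX <= cnt U (bdry E (setU X Y))) by (apply (minX (setU X Y)); auto).
  split; split; auto; eexists; split; eauto; intros X' c' H1 H2;
    specialize (minX X' c' H1 H2); lia.
Qed.
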